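(* Let $n\ge 1$, let $C, A_1,\ldots,A_m$ be real symmetric $n\times n$ matrices and $b\in\mathbb{R}^m$, and suppose the semidefinite program $$SOS^*:=\min_{X\in S_n}\ C\cdot X \quad\text{s.t. } A_i\cdot X=b_i\ (i=1,\ldots,m),\ X\succeq 0$$ has an optimal solution. For an $n\times n$ real matrix $U$ let $DD(U):=\{M\in S_n : M=U^TQU \text{ for some diagonally dominant } Q\in S_n\}$, and for a matrix $U$ consider the linear program $$LP(U):\quad \min_{X\in S_n} C\cdot X \quad\text{s.t. } A_i\cdot X=b_i\ (i=1,\ldots,m),\ X\in DD(U).$$ Define the sequence $U_0=I$, and for $k\ge 0$ let $DSOS_k$ be the optimal value of $LP(U_k)$, $X_k$ an optimal solution of $LP(U_k)$, and $U_{k+1}=\mathrm{chol}(X_k)$; assume an optimal solution exists at every iteration. Fix $k$, let $X_k$ and $X_{k+1}$ be optimal solutions of iterations $k$ and $k+1$, and assume that $X_k$ is positive definite and $SOS^*<DSOS_k$. Then $DSOS_{k+1}<DSOS_k$.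
   Context: $S_n$ denotes the real symmetric $n\times n$ matrices and $A\cdot B=\sum_{i,j}A_{ij}B_{ij}=\mathrm{Trace}(AB)$. A symmetric matrix $A$ is diagonally dominant if $a_{ii}\ge\sum_{j\ne i}|a_{ij}|$ for all $i$. For a positive semidefinite matrix $A$, $\mathrm{chol}(A)$ denotes an upper triangular (Cholesky) factor $U$ with $A=U^TU$ (unique with positive diagonal when $A$ is positive definite). *)

(* Defs.v *)
From HB Require Import structures.
From mathcomp Require Import all_boot all_order all_algebra.
From mathcomp Require Import reals.
Set Implicit Arguments. Unset Strict Implicit. Unset Printing Implicit Defensive.
Import Order.TTheory GRing.Theory Num.Theory.
Local Open Scope ring_scope.

Section Defs.
Variable R : realType.
Variable n : nat.

Definition frob_dot (A B : 'M[R]_n) : R := \sum_(i < n) \sum_(j < n) A i j * B i j.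

Definition symmx (A : 'M[R]_n) : Prop := A^T = A.

Definition is_psd (X : 'M[R]_n) : Prop :=
  symmx X /\ forall v : 'cV[R]_n, 0 <= (v^T *m X *m v) 0 0.

Definition is_pd (X : 'M[R]_n) : Prop :=
  symmx X /\ forall v : 'cV[R]_n, v != 0 -> 0 < (v^T *m X *m v) 0 0.

Definition diag_dominant (Q : 'M[R]_n) : Prop :=
  forall i : 'I_n, \sum_(j < n | j != i) `|Q i j| <= Q i i.

Definition inDD (U M : 'M[R]_n) : Prop :=
  symmx M /\
  exists Q : 'M[R]_n, symmx Q /\ diag_dominant Q /\ M = U^T *m Q *m U.

(* upper triangular factor U with A = U^T U (nonnegative diagonal, so that
   it is the unique Cholesky factor when A is positive definite) *)
Definition is_chol (U A : 'M[R]_n) : Prop :=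
  (forall i j : 'I_n, (j < i)%N -> U i j = 0) /\
  (forall i : 'I_n, 0 <= U i i) /\
  A = U^T *m U.

Variable m : nat.
Variables (C : 'M[R]_n) (Acon : 'I_m -> 'M[R]_n) (b : 'I_m -> R).

Definition lin_feasible (X : 'M[R]_n) : Prop :=
  forall i : 'I_m, frob_dot (Acon i) X = b i.

Definition sdp_optimal (X : 'M[R]_n) : Prop :=
  lin_feasible X /\ is_psd X /\
  forall Y, lin_feasible Y -> is_psd Y -> frob_dot C X <= frob_dot C Y.

Definition lp_optimal (U X : 'M[R]_n) : Prop :=
  lin_feasible X /\ inDD U X /\
  forall Y, lin_feasible Y -> inDD U Y -> frob_dot C X <= frob_dot C Y.

End Defs.

(* Main.v *)
Require Import Defs.
From HB Require Import structures.
From mathcomp Require Import all_boot all_order all_algebra.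
From mathcomp Require Import reals.
From mathcomp Require Import ring lra.
Import Order.TTheory GRing.Theory Num.Theory.
Local Open Scope ring_scope.

Lemma frob_lin (R : realType) n (A X Y : 'M[R]_n) (a c : R) :
  frob_dot A (a *: X + c *: Y) = a * frob_dot A X + c * frob_dot A Y.
Proof.
rewrite /frob_dot !mulr_sumr -big_split /=; apply: eq_bigr => i _.
rewrite !mulr_sumr -big_split /=; apply: eq_bigr => j _.
rewrite !mxE; ring.
Qed.

Lemma chol_unit (R : realType) n (U X : 'M[R]_n) :
  is_pd X -> X = U^T *m U -> U \in unitmx.
Proof.
move=> [_ Hpd] HX; rewrite unitmxE unitfE; apply/negP => /eqP H0.
have : \det U^T == 0 by rewrite det_tr H0.
move/det0P => [v vn0 vU].
have wn0 : v^T != 0.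
  apply: contra vn0 => /eqP h; apply/eqP.
  by rewrite -(trmxK v) h trmx0.
have Uw : U *m v^T = 0 by rewrite -(trmxK U) -trmx_mul vU trmx0.
have := Hpd _ wn0.
by rewrite HX trmxK !mulmxA vU mul0mx mul0mx mxE ltxx.
Qed.

Theorem theorem3p1 (R : realType) (n m : nat) (C : 'M[R]_n)
  (A : 'I_m -> 'M[R]_n) (b : 'I_m -> R)
  (U X : nat -> 'M[R]_n) (Xs : 'M[R]_n) (k : nat) :
  (0 < n)%N ->
  symmx C -> (forall i, symmx (A i)) ->
  sdp_optimal C A b Xs ->
  U 0%N = 1%:M ->
  (forall j, lp_optimal C A b (U j) (X j)) ->
  (forall j, is_chol (U j.+1) (X j)) ->
  is_pd (X k) ->
  frob_dot C Xs < frob_dot C (X k) ->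
  frob_dot C (X k.+1) < frob_dot C (X k).
Proof.
move=> _ _ _ [Xsf [[Xssym _] _]] _ Hlp Hch Hpd Hlt.
set V := U k.+1.
have [_ [_ HXk]] := Hch k.
have Vu : V \in unitmx by apply: chol_unit Hpd HXk.
have [Xkf [[Xksym _] _]] := Hlp k.
have [_ [_ Hopt]] := Hlp k.+1.
set W := (invmx V)^T *m Xs *m invmx V.
have Wsym : W^T = W by rewrite /W !trmx_mul trmxK Xssym mulmxA.
have VWV : V^T *m W *m V = Xs.
  rewrite /W !mulmxA -trmx_mul mulVmx // trmx1 mul1mx -mulmxA mulVmx //.
  by rewrite mulmx1.
set S := \sum_(i < n) \sum_(j < n) `|W i j|.
have S0 : 0 <= S by apply: sumr_ge0 => i _; apply: sumr_ge0 => j _.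
set t := (1 + S)^-1.
have t0 : 0 < t by rewrite invr_gt0; lra.
have tS : t * S = 1 - t.
  rewrite /t; field; apply/eqP => h; lra.
set Y := (1 - t) *: X k + t *: Xs.
have HY : frob_dot C (X k.+1) <= frob_dot C Y.
  apply: Hopt.
    move=> i; rewrite /Y frob_lin Xkf Xsf; ring.
  split.
    by rewrite /symmx /Y linearD !linearZ /= Xksym Xssym.
  exists ((1 - t)%:M + t *: W); split.
    by rewrite /symmx linearD linearZ /= tr_scalar_mx Wsym.
  split; last first.
    rewrite mulmxDr mulmxDl /Y HXk -VWV.
    by rewrite mul_mx_scalar -scalemxAl -!scalemxAr -scalemxAl.
  move=> i.
  have Hrow : \sum_(j < n) `|W i j| <= S.
    rewrite /S [X in _ <= X](bigD1 i) //= lerDl; apply: sumr_ge0 => l _.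
    by apply: sumr_ge0.
  rewrite (bigD1 i) //= in Hrow.
  have -> : \sum_(j < n | j != i) `|((1 - t)%:M + t *: W) i j| =
            t * \sum_(j < n | j != i) `|W i j|.
    rewrite mulr_sumr; apply: eq_bigr => j ji.
    rewrite !mxE eq_sym (negbTE ji) mulr0n add0r normrM gtr0_norm //.
  have -> : ((1 - t)%:M + t *: W) i i = 1 - t + t * W i i by rewrite !mxE eqxx mulr1n.
  have := ler_wpM2l (ltW t0) Hrow; rewrite tS mulrDr.
  have : - W i i <= `|W i i| by rewrite -normrN ler_norm.
  move=> h1 h2.
  have h3 := ler_wpM2l (ltW t0) h1.
  rewrite mulrN in h3. lra.
have : frob_dot C Y < frob_dot C (X k).
  rewrite /Y frob_lin.
  have h : t * frob_dot C Xs < t * frob_dot C (X k) by rewrite ltr_pM2l.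
  lra.
move=> h; exact: (le_lt_trans HY h).
Qed.
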